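(* Let $0<p<1$, let $n\ge 1$, $0\le m\le n$ and $d\ge 1$ be integers, and let $X_1,\ldots,X_n$ be i.i.d. Bernoulli random variables with $P(X_i=1)=p$. Let $L_n$ be the length of the longest run of consecutive $1$'s in $X_1,\ldots,X_n$ (with $L_n=0$ if there is no $1$). Consider the finite set of states $\mathcal{S}=\{(l,j): 0\le l\le m,\ 0\le j\le \min(l,d-1)\}$, where $l$ records the number of $1$'s observed so far and $j$ the length of the current trailing run of $1$'s (the longest suffix of the form $1\cdots1$ of length less than $d$). For $t=1,\ldots,n$ let $\mathbf{N}_t(m)$ be the $\mathcal{S}\times\mathcal{S}$ matrix whose only nonzero entries are \[ \mathbf{N}_t(m)\big((l,j),(l+1,j+1)\big)=\frac{m-l}{n-t+1}\quad\text{if } l+1\le m \text{ and } j+1\le d-1, \] \[ \mathbf{N}_t(m)\big((l,j),(l,0)\big)=\frac{n-m-t+l+1}{n-t+1}, \] (all other entries, in particular transitions that would complete a run of $d$ ones, being $0$). Let $\boldsymbol{\xi}_0$ be the row vector indexed by $\mathcal{S}$ with entry $1$ at $(0,0)$ and $0$ elsewhere, and $\mathbf{1}$ the all-ones row vector indexed by $\mathcal{S}$. Then \[ P\Big(L_n<d \,\Big|\, \sum_{i=1}^n X_i=m\Big)=\boldsymbol{\xi}_0\prod_{t=1}^{n}\mathbf{N}_t(m)\,\mathbf{1}^{\top}. \] In particular this conditional probability does not depend on $p$.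
   Context: The matrices $\mathbf{N}_t(m)$ are the essential (non-absorbing) parts of the transition matrices of a nonhomogeneous Markov chain imbedding the outcome of a uniformly random arrangement of $m$ ones and $n-m$ zeros: at step $t$, given $l$ ones among the first $t-1$ positions, the next symbol is $1$ with probability $(m-l)/(n-t+1)$ and $0$ with probability $(n-m-(t-1-l))/(n-t+1)$; entering a run of $d$ ones corresponds to absorption and is excluded from the essential part. *)

(* Defs.v *)
From HB Require Import structures.
From mathcomp Require Import all_boot all_order all_algebra.
Set Implicit Arguments. Unset Strict Implicit. Unset Printing Implicit Defensive.
Import Order.TTheory GRing.Theory Num.Theory.
Local Open Scope ring_scope.

(* Outcomes of X_1..X_n : x : {ffun 'I_n -> bool}, x i = true iff X_(i+1) = 1. *)
Definition outcome (n : nat) := {ffun 'I_n -> bool}.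

Definition nones (n : nat) (x : outcome n) : nat := #|[set i | x i]|.

Definition bprob (R : realFieldType) (p : R) (n : nat) (A : pred (outcome n)) : R :=
  \sum_(x : outcome n | A x) p ^+ nones x * (1 - p) ^+ (n - nones x).

Definition bcondprob (R : realFieldType) (p : R) (n : nat)
  (A B : pred (outcome n)) : R :=
  bprob p (predI A B) / bprob p B.

Definition is_run (n : nat) (x : outcome n) (i j : nat) : bool :=
  [forall k : 'I_n, ((i <= k) && (k < j))%N ==> x k].

Definition longest_run (n : nat) (x : outcome n) : nat :=
  \max_(i < n.+1) \max_(j < n.+1 | (i <= j)%N && is_run x i j) (j - i)%N.

Definition state (m d : nat) : finType := {s : 'I_m.+1 * 'I_d | (s.2 <= s.1)%N}.

Definition st_l (m d : nat) (s : state m d) : nat := (val s).1.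
Definition st_j (m d : nat) (s : state m d) : nat := (val s).2.

Definition Nentry (R : realFieldType) (n m d t : nat) (a b : state m d) : R :=
  (if [&& st_l b == (st_l a).+1, st_j b == (st_j a).+1,
        ((st_l a).+1 <= m)%N & ((st_j a).+1 <= d.-1)%N]
   then (m%:R - (st_l a)%:R) / (n%:R - t%:R + 1) else 0)
  + (if (st_l b == st_l a) && (st_j b == 0%N)
     then (n%:R - m%:R - t%:R + (st_l a)%:R + 1) / (n%:R - t%:R + 1) else 0).

Definition Nmat (R : realFieldType) (n m d t : nat) : 'M[R]_#|state m d| :=
  \matrix_(a, b) @Nentry R n m d t (enum_val a) (enum_val b).

Definition Nprod (R : realFieldType) (n m d : nat) : 'M[R]_#|state m d| :=
  \big[mulmx/1%:M]_(t < n) @Nmat R n m d t.+1.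

Definition xi0 (R : realFieldType) (m d : nat) : 'rV[R]_#|state m d| :=
  \row_a (if (st_l (enum_val a) == 0%N) && (st_j (enum_val a) == 0%N) then 1 else 0).

Definition ones_row (R : realFieldType) (k : nat) : 'rV[R]_k := const_mx 1.

(* Main.v *)
Require Import Defs.
From HB Require Import structures.
From mathcomp Require Import all_boot all_order all_algebra.
From mathcomp Require Import zify ring lra.
Import Order.TTheory GRing.Theory Num.Theory.

Fixpoint words (r : nat) : seq (seq bool) :=
  if r is r'.+1 then map (cons true) (words r') ++ map (cons false) (words r')
  else [:: [::]].

Lemma mem_words r v : (v \in words r) = (size v == r).
Proof.
elim: r v => [|r IH] [|b v] //=.
- by rewrite mem_cat; apply/orP => -[] /mapP[v' _].
- rewrite mem_cat eqSS -IH.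
  case: b.
  + rewrite mem_map; last by move=> ? ? [].
    by apply/orP/idP => [[//|/mapP[? _ //]]|]; left.
  + rewrite mem_map; last by move=> ? ? [].
    by apply/orP/idP => [[/mapP[? _ //]|//]|]; right.
Qed.

Lemma uniq_words r : uniq (words r).
Proof.
elim: r => [|r IH] //=.
rewrite cat_uniq !map_inj_uniq // ?IH; try by move=> ? ? [].
rewrite andbT /=; apply/hasPn => v /mapP[v' _ ->].
by apply/mapP => [[? _]].
Qed.

Lemma count_words_bin r q : count (fun v => count id v == q) (words r) = 'C(r, q).
Proof.
elim: r q => [|r IH] q /=; first by rewrite bin0n addn0; case: q.
rewrite count_cat !count_map.
case: q => [|q].
  rewrite bin0 (eq_count (a2 := pred0)) ?count_pred0 //.
  rewrite (eq_count (a2 := fun v => count id v == 0)) ?IH ?bin0 //.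
rewrite binS -!IH addnC; congr (_ + _); apply: eq_count => v //=.
Qed.

Section Good.
Variable d : nat.

Fixpoint good (j : nat) (w : seq bool) : bool :=
  match w with
  | [::] => true
  | b :: w' => if b then (j.+1 < d) && good j.+1 w' else good 0 w'
  end.

Definition runfree (s : seq bool) : Prop :=
  forall i, ~~ all (fun k => nth false s k) (iota i d).

Lemma nth_nseq_cat j w k : nth false (nseq j true ++ w) k = if k < j then true else nth false w (k - j).
Proof. rewrite nth_cat size_nseq nth_nseq. by case: (k < j). Qed.

Lemma good_runfree (d_gt0 : 0 < d) w j : j < d -> good j w <-> runfree (nseq j true ++ w).
Proof.
elim: w j => [|b w IH] j jd /=.
  split => // _ i; apply/allPn; exists (i + d.-1); first by rewrite mem_iota; lia.
  rewrite nth_nseq_cat nth_nil; case: ifP => //; lia.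
case: b.
  have -> : nseq j true ++ true :: w = nseq j.+1 true ++ w by elim: j {jd IH} => //= j ->.
  case: (ltnP j.+1 d) => hj.
    exact: IH.
  rewrite andFb; split => // /(_ 0) /allPn[k]; rewrite mem_iota => hk.
  by rewrite nth_nseq_cat; case: ifP => //; lia.
rewrite IH //= /runfree.
have key k : nth false (nseq j true ++ false :: w) (j.+1 + k) = nth false w k.
  by rewrite nth_nseq_cat ifF; [rewrite (_ : j.+1 + k - j = k.+1) //; lia | lia].
split => H i.
  case: (leqP i j) => hij.
    apply/allPn; exists j; first by rewrite mem_iota; lia.
    by rewrite nth_nseq_cat ltnn subnn.
  have /allPn[k] := H (i - j.+1); rewrite mem_iota => hk hn.
  apply/allPn; exists (j.+1 + k); first by rewrite mem_iota; lia.
  by rewrite key.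
have /allPn[k] := H (j.+1 + i); rewrite mem_iota => hk hn.
apply/allPn; exists (k - j.+1); first by rewrite mem_iota; lia.
by rewrite -key (_ : j.+1 + (k - j.+1) = k) //; lia.
Qed.

Definition K r q j := count (fun v => (count id v == q) && good j v) (words r).

Lemma K_rec r q j : K r.+1 q j =
  (if (0 < q) && (j.+1 < d) then K r q.-1 j.+1 else 0) + K r q 0.
Proof.
rewrite /K /= count_cat !count_map; congr (_ + _).
  case: q => [|q] /=.
    by rewrite (eq_count (a2 := pred0)) ?count_pred0.
  case: ifP => hj.
    by apply: eq_count => v /=; rewrite eqSS hj.
  by rewrite (eq_count (a2 := pred0)) ?count_pred0 // => v /=; rewrite hj andbF.
Qed.

Lemma K_big r q j : r < q -> K r q j = 0.
Proof.
elim: r q j => [|r IH] q j h.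
  by rewrite /K /=; case: q h.
rewrite K_rec (IH q 0); last lia.
case: ifP => // /andP[h1 _]; rewrite IH; lia.
Qed.
End Good.

Section Bridge.
Variable n : nat.

Definition wl (x : outcome n) : seq bool := [seq x i | i <- enum 'I_n].

Lemma size_wl x : size (wl x) = n.
Proof. by rewrite size_map size_enum_ord. Qed.

Lemma nth_wl x (i : 'I_n) : nth false (wl x) i = x i.
Proof. by rewrite (nth_map i) ?nth_ord_enum // size_enum_ord. Qed.

Lemma nth_wl_ge x k : n <= k -> nth false (wl x) k = false.
Proof. by move=> h; rewrite nth_default // size_wl. Qed.

Lemma wl_inj : injective wl.
Proof. by move=> x y h; apply/ffunP => i; rewrite -!nth_wl h. Qed.

Lemma nones_wl x : nones x = count id (wl x).
Proof.
rewrite /nones /wl count_map cardsE cardE /enum_mem size_filter.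
rewrite (@eq_filter _ _ predT) // filter_predT.
by apply: eq_count.
Qed.

Lemma card_wl (Q : pred (seq bool)) :
  #|[pred x : outcome n | Q (wl x)]| = count Q (words n).
Proof.
rewrite cardE /enum_mem size_filter -enumT.
rewrite (eq_count (a2 := preim wl Q)) // -count_map.
apply/permP; apply: uniq_perm.
- by rewrite map_inj_uniq ?enum_uniq //; exact: wl_inj.
- exact: uniq_words.
move=> v; rewrite mem_words; apply/mapP/idP => [[x _ ->]|/eqP hv].
  by rewrite size_wl.
exists [ffun i : 'I_n => nth false v i]; first by rewrite mem_enum.
apply: (@eq_from_nth _ false); first by rewrite size_wl.
move=> k; rewrite hv => hk.
by rewrite (nth_wl _ (Ordinal hk)) ffunE.
Qed.

Lemma lr_wl (d : nat) x : 0 < d -> (longest_run x < d)%N <-> runfree d (wl x).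
Proof.
move=> d0; split => [hL i|hR].
  apply/negP => /allP hall.
  have hin k : i <= k < i + d -> nth false (wl x) k by move=> hk; apply: hall; rewrite mem_iota.
  have hid : i + d <= n.
    have := hin (i + d.-1); case: (leqP n (i + d.-1)) => h.
      by rewrite nth_wl_ge //; lia.
    lia.
  have hi : i < n.+1 by lia.
  have hj : i + d < n.+1 by lia.
  have hrun : is_run x i (i + d).
    apply/forallP => k; apply/implyP => hk.
    by rewrite -nth_wl; apply: hin.
  have : d <= longest_run x.
    apply: leq_trans (leq_bigmax (Ordinal hi)).
    apply: leq_trans (leq_bigmax_cond (Ordinal hj) _) => /=.
      lia.
    by rewrite hrun andbT; lia.
  lia.
have : longest_run x <= d.-1.
  apply/bigmax_leqP => i _; apply/bigmax_leqP => j /andP[hij hrun].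
  rewrite leqNgt; apply/negP => hlt.
  have := hR i; apply/negP; rewrite negbK; apply/allP => k; rewrite mem_iota => hk.
  have hkn : k < n by move: (ltn_ord j); lia.
  rewrite (nth_wl _ (Ordinal hkn)).
  move/forallP: hrun => /(_ (Ordinal hkn)) /implyP; apply => /=; lia.
lia.
Qed.
End Bridge.

Local Open Scope ring_scope.

Section Alg.
Variable R : realFieldType.

Lemma fact_neq0 k : (k`!)%:R != 0 :> R.
Proof. by rewrite pnatr_eq0 -lt0n fact_gt0. Qed.

Lemma alg0 (k : nat) (K0 H0 : R) :
  H0 = K0 * (0`!)%:R * ((k - 0)`!)%:R / (k`!)%:R ->
  (k.+1 - 0)%:R / (k.+1)%:R * H0 = K0 * (0`!)%:R * ((k.+1 - 0)`!)%:R / (k.+1`!)%:R.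
Proof.
move=> ->; rewrite !subn0 fact0 mulr1 divff ?mul1r; last by rewrite pnatr_eq0.
by rewrite -!mulrA !divff ?fact_neq0.
Qed.

Lemma algS (k q : nat) (K1 K0 : nat) (H0 : R) : (q <= k)%N ->
  ((q.+1 <= k)%N -> H0 = K0%:R * (q.+1`!)%:R * ((k - q.+1)`!)%:R / (k`!)%:R) ->
  ((k < q.+1)%N -> K0 = 0%N) ->
  (q.+1)%:R / (k.+1)%:R * (K1%:R * (q`!)%:R * ((k - q)`!)%:R / (k`!)%:R)
  + (k.+1 - q.+1)%:R / (k.+1)%:R * H0
  = (K1 + K0)%:R * (q.+1`!)%:R * ((k.+1 - q.+1)`!)%:R / (k.+1`!)%:R.
Proof.
move=> hq hH hK.
have kf := fact_neq0 k; have qf := fact_neq0 q.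
have k1 : (k.+1)%:R != 0 :> R by rewrite pnatr_eq0.
case: (ltnP q k) => h.
  rewrite hH //.
  have [e ek] : exists e, k = (q + e.+1)%N by exists (k - q.+1)%N; lia.
  have e1 : (k - q = e.+1)%N by lia.
  have e2 : (k.+1 - q.+1 = e.+1)%N by lia.
  have e3 : (k - q.+1 = e)%N by lia.
  rewrite e1 e2 e3 !factS !natrM !natrD.
  have ef := fact_neq0 e.
  field; rewrite kf /= addrC natr1; exact: k1.
have ekq : k = q by lia.
subst k; rewrite hK // addn0 !subnn fact0 mul0r mul0r addr0 mulr1 mulr1 divff ?mul1r; last by rewrite pnatr_eq0.
rewrite -mulrA divff // mulr1 -mulrA divff ?mulr1 //; exact: fact_neq0.
Qed.
End Alg.

Section Mat.
Variables (R : realFieldType) (n m d : nat).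
Hypotheses (d0 : (0 < d)%N) (mn : (m <= n)%N).

Local Notation S := (state m d).
Local Notation N t := (Nmat R n m d t).

Definition P k : 'M[R]_#|S| := \big[mulmx/1%:M]_(i < k) N (n - k + i.+1)%N.
Definition H k (s : S) : R := (P k *m (ones_row R #|S|)^T) (enum_rank s) 0.

Lemma entry_mul t (V : 'cV[R]_#|S|) s :
  (N t *m V) (enum_rank s) 0 = \sum_(b : S) @Nentry R n m d t s b * V (enum_rank b) 0.
Proof.
rewrite mxE (reindex enum_rank) /=; last exact: onW_bij (enum_rank_bij S).
by apply: eq_bigr => b _; rewrite mxE !enum_rankK.
Qed.

Lemma sum_if1 (T : finType) (Pr : pred T) (x0 : T) (c : R) (h : T -> R) :
  (forall b, Pr b = (b == x0)) -> \sum_b (if Pr b then c else 0) * h b = c * h x0.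
Proof.
move=> hP; rewrite (bigD1 x0) //= hP eqxx big1 ?addr0 // => b hb.
by rewrite hP (negbTE hb) mul0r.
Qed.

Definition mkS l j (hl : (l < m.+1)%N) (hj : (j < d)%N) (hjl : (j <= l)%N) : S :=
  exist _ (Ordinal hl, Ordinal hj) hjl.

Lemma st_l_mkS l j hl hj hjl : st_l (@mkS l j hl hj hjl) = l. Proof. by []. Qed.
Lemma st_j_mkS l j hl hj hjl : st_j (@mkS l j hl hj hjl) = j. Proof. by []. Qed.

Lemma eq_mkS b l j hl hj hjl : (b == @mkS l j hl hj hjl) = (st_l b == l) && (st_j b == j).
Proof. by case: b => [[l' j'] h]. Qed.

Lemma P_S k : (k < n)%N -> P k.+1 = N (n - k)%N *m P k.
Proof.
move=> hk; rewrite /P big_ord_recl; congr (mulmx _ _).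
  by rewrite /=; congr (Nmat _ _ _ _ _); lia.
apply eq_bigr => i _; rewrite lift0; congr (Nmat _ _ _ _ _); lia.
Qed.


Lemma H_claim k : (k <= n)%N -> forall s : S, (m - st_l s <= k)%N ->
  H k s = (K d k (m - st_l s)%N (st_j s))%:R * ((m - st_l s)%N`!)%:R
          * ((k - (m - st_l s))%N`!)%:R / (k`!)%:R.
Proof.
elim: k => [|k IH] hk s hq.
  rewrite /H /P big_ord0 mul1mx trmx_const mxE.
  rewrite (_ : (m - st_l s = 0)%N); last by lia.
  by rewrite /K /= fact0 mulr1 mulr1 divr1.
have hk' : (k < n)%N by lia.
rewrite /H P_S // -mulmxA entry_mul.
have hl : (st_l s <= m)%N by rewrite /st_l; move: (ltn_ord (val s).1); lia.
have hj : (st_j s < d)%N by rewrite /st_j; exact: ltn_ord.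
have hjl : (st_j s <= st_l s)%N by exact: (valP s).
rewrite /Nentry.
under eq_bigr do rewrite mulrDl.
rewrite big_split /=.
have hl1 : (st_l s < m.+1)%N by lia.
have HH x : (P k *m (ones_row R #|S|)^T) (enum_rank x) 0 = H k x by [].
have hl0 : (st_l s < m.+1)%N by lia.
rewrite (@sum_if1 _ (fun b => (st_l b == st_l s) && (st_j b == 0%N)) (@mkS _ _ hl0 d0 (leq0n _)));
  last by move=> b; rewrite eq_mkS.
have e1 : (n%:R - (n - k)%N%:R + 1 : R) = k.+1%:R.
  by rewrite natrB ?(ltnW hk) // -natr1; ring.
have e2 : (m%:R - (st_l s)%:R : R) = (m - st_l s)%N%:R by rewrite natrB.
have e3 : (n%:R - m%:R - (n - k)%N%:R + (st_l s)%:R + 1 : R) = (k.+1 - (m - st_l s))%N%:R.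
  rewrite (natrB _ hq) (natrB _ (ltnW hk)) (natrB _ hl) -natr1; ring.
rewrite e1 e2 e3 !HH.
have IH0 := IH (ltnW hk) (@mkS _ _ hl0 d0 (leq0n _)); rewrite st_l_mkS st_j_mkS in IH0.
case: (boolP ((st_l s < m)%N && (st_j s < d.-1)%N)) => c.
  have [c1 c2] := andP c.
  have h1 : ((st_l s).+1 < m.+1)%N by lia.
  have h2 : ((st_j s).+1 < d)%N by lia.
  rewrite (@sum_if1 _ _ (@mkS _ _ h1 h2 hjl)); last first.
    by move=> b; rewrite eq_mkS ?c1 ?c2 ?andbT.
  rewrite !HH (IH (ltnW hk)) ?st_l_mkS ?st_j_mkS; last by lia.
  have [q' eq'] : exists q', (m - st_l s)%N = q'.+1 by exists (m - st_l s).-1; lia.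
  have eq2 : (m - (st_l s).+1)%N = q' by lia.
  rewrite eq' eq2 K_rec h2 /=.
  apply: algS; first by lia.
    by move=> hq'; rewrite IH0 eq'.
  by move=> hq'; rewrite K_big.
rewrite big1 ?add0r; last first.
  by move=> b _; rewrite !andbF mul0r.
case eq0 : (m - st_l s)%N => [|q'].
  rewrite K_rec /= add0n.
  by apply: alg0; rewrite IH0 eq0.
rewrite K_rec.
have -> : ((0 < q'.+1)%N && ((st_j s).+1 < d)%N) = false.
  by apply/negbTE; move: c; apply: contra => /andP[_ h]; apply/andP; split; lia.
rewrite add0n.
have := @algS R k q' 0%N (K d k q'.+1 0) (H k (@mkS _ _ hl0 d0 (leq0n _))).
rewrite add0n mul0r mul0r mul0r mulr0 add0r; apply.
- by lia.
- by move=> hq'; rewrite IH0 eq0.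
- by move=> hq'; rewrite K_big.
Qed.
End Mat.

Lemma bprob_const (R : realFieldType) (p : R) n m (Pr : pred (outcome n)) :
  (forall x, Pr x -> nones x = m) ->
  bprob p Pr = (#|[pred x | Pr x]|)%:R * (p ^+ m * (1 - p) ^+ (n - m)).
Proof.
move=> hP; rewrite /bprob (eq_bigr (fun _ => p ^+ m * (1 - p) ^+ (n - m))); last first.
  by move=> x /hP ->.
transitivity (\sum_(x in [pred x | Pr x]) (p ^+ m * (1 - p) ^+ (n - m))).
  by apply: eq_bigl.
by rewrite sumr_const mulr_natl.
Qed.

Theorem mainTheorem1 (R : realFieldType) (p : R) (n m d : nat) :
  0 < p -> p < 1 -> (1 <= n)%N -> (m <= n)%N -> (1 <= d)%N ->
  bcondprob p (fun x : outcome n => (longest_run x < d)%N)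
              (fun x : outcome n => nones x == m)
  = ((xi0 R m d *m Nprod R n m d *m (ones_row R #|state m d|)^T) 0 0).
Proof.
move=> p0 p1 n1 mn d0.
have hm0 : (0 < m.+1)%N by [].
pose s00 := @mkS m d 0 0 hm0 d0 (leqnn 0).
have RHS : (xi0 R m d *m Nprod R n m d *m (ones_row R #|state m d|)^T) 0 0
    = (K d n m 0)%:R * (m`!)%:R * ((n - m)`!)%:R / (n`!)%:R.
  have -> : Nprod R n m d = P R n m d n.
    rewrite /Nprod /P; apply: eq_bigr => i _; by rewrite subnn.
  rewrite -mulmxA mxE (reindex enum_rank) /=; last exact: onW_bij (enum_rank_bij _).
  under eq_bigr => b _ do rewrite [X in X * _]mxE enum_rankK.
  rewrite (@sum_if1 R _ _ s00); last by move=> b; rewrite eq_mkS.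
  rewrite -/(H R n m d n s00) H_claim // ?st_l_mkS ?st_j_mkS subn0 //.
  by rewrite mul1r.
rewrite RHS /bcondprob.
rewrite (@bprob_const R p n m); last by move=> x /andP[_ /eqP].
rewrite (@bprob_const R p n m (fun x => nones x == m)); last by move=> x /eqP.
have cA : #|[pred x | predI (fun x : outcome n => (longest_run x < d)%N)
                          (fun x => nones x == m) x]| = K d n m 0.
  rewrite /K -card_wl; apply: eq_card => x; rewrite !inE /= nones_wl andbC.
  congr (_ && _); apply/idP/idP => h.
    by apply/(@good_runfree d d0 (wl n x) 0 d0); apply/(@lr_wl n d x d0).
  by apply/(@lr_wl n d x d0); apply/(@good_runfree d d0 (wl n x) 0 d0).
have cB : #|[pred x : outcome n | nones x == m]| = 'C(n, m).
  by rewrite -count_words_bin -card_wl; apply: eq_card => x; rewrite !inE nones_wl.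
rewrite cA cB.
have hw : p ^+ m * (1 - p) ^+ (n - m) != 0.
  by rewrite mulf_neq0 // expf_neq0 // ?gt_eqF // subr_gt0.
have hC : ('C(n, m))%:R != 0 :> R by rewrite pnatr_eq0 -lt0n bin_gt0.
have := bin_fact mn => /(congr1 (fun k => k%:R : R)); rewrite !natrM => <-.
have := fact_neq0 R m; have := fact_neq0 R (n - m).
move=> h1 h2; field.
have hp : p != 0 by rewrite gt_eqF.
have hq : 1 - p != 0 by rewrite gt_eqF // subr_gt0.
by rewrite h1 h2 hC (expf_neq0 _ hq) (expf_neq0 _ hp).
Qed.
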